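(* Let $\mathcal{K}$ be a continuous unitary representation of $\overline{\mathfrak{S}}_\infty$ in a Hilbert space $\mathcal{H}$, let $n\geq 0$ be an integer, and let $P_n$ be the weak-operator limit of $\mathcal{K}({}^n\sigma_m)$ as $m\to\infty$. Then $P_n$ is a projection, i.e. $P_n^2=P_n$.
   Context: $\overline{\mathfrak{S}}_\infty$ is the group of all bijections of $\mathbb{N}$, with the Polish topology in which the subgroups $\mathfrak{S}(n,\infty)=\{s: s(k)=k \text{ for } k=1,\dots,n\}$ form a fundamental system of neighborhoods of the identity; continuity of $\mathcal{K}$ means $\lim_{k\to\infty}\sup_{s\in\mathfrak{S}(k,\infty)}\|\mathcal{K}(s)\eta-\eta\|=0$ for each $\eta\in\mathcal{H}$. $(k\;j)$ denotes the transposition of $k$ and $j$, and ${}^n\sigma_m=(n+1\;\;n+m+1)(n+2\;\;n+m+2)\cdots(n+m\;\;n+2m)$. The weak-operator limit $P_n=\lim_{m\to\infty}\mathcal{K}({}^n\sigma_m)$ exists and is a self-adjoint operator. *)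

(* Defs.v *)
From HB Require Import structures.
From mathcomp Require Import all_boot all_order all_algebra.
From mathcomp Require Import complex.
From mathcomp Require Import reals.
Set Implicit Arguments.
Unset Strict Implicit.
Unset Printing Implicit Defensive.
Import Order.TTheory GRing.Theory Num.Theory.
Local Open Scope ring_scope.

(* Bijections of N.  We use 0-based naturals: the point k of N = {1,2,..}
   of the paper is the natural number k-1 here.                          *)
Record bij := Bij {
  bfun :> nat -> nat;
  binv : nat -> nat;
  bfunK : cancel bfun binv;
  binvK : cancel binv bfun }.

Definition bij_id : bij := @Bij id id (fun _ => erefl) (fun _ => erefl).

Lemma bij_comp_K (s t : bij) : cancel (s \o t) (binv t \o binv s).
Proof. by move=> x /=; rewrite bfunK bfunK. Qed.
Lemma bij_comp_Kinv (s t : bij) : cancel (binv t \o binv s) (s \o t).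
Proof. by move=> x /=; rewrite binvK binvK. Qed.

Definition bij_comp (s t : bij) : bij :=
  @Bij (s \o t) (binv t \o binv s) (bij_comp_K s t) (bij_comp_Kinv s t).

Definition trf (a b : nat) (j : nat) : nat :=
  if j == a then b else if j == b then a else j.
Lemma trfK (a b : nat) : cancel (trf a b) (trf a b).
Proof.
move=> j; rewrite /trf.
case: (eqVneq j a) => [->|hja]; first by rewrite eqxx; case: eqVneq.
case: (eqVneq j b) => [->|hjb]; first by rewrite eqxx.
by rewrite (negPf hja) (negPf hjb).
Qed.
Definition transp (a b : nat) : bij := @Bij (trf a b) (trf a b) (trfK a b) (trfK a b).

(* ^n sigma_m = (n+1 n+m+1)(n+2 n+m+2)...(n+m n+2m)   (1-based, paper)
            = (n  n+m)(n+1 n+m+1)...(n+m-1 n+2m-1)   (0-based, here)   *)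
Definition nsigma (n m : nat) : bij :=
  foldr bij_comp bij_id [seq transp (n + i) (n + m + i) | i <- iota 0 m].

Definition fixes_first (k : nat) (s : bij) : Prop := forall j, (j < k)%N -> s j = j.

Record is_hilbert (R : realType) (H : lmodType R[i]) (ip : H -> H -> R[i]) : Prop := {
  ip_linl : forall (a : R[i]) (x y z : H), ip (a *: x + y) z = a * ip x z + ip y z;
  ip_herm : forall x y : H, ip y x = (ip x y)^*;
  ip_ge0 : forall x : H, 0 <= ip x x;
  ip_eq0 : forall x : H, ip x x = 0 -> x = 0;
  ip_complete : forall u : nat -> H,
    (forall e : R[i], 0 < e -> exists N, forall p q, (N <= p)%N -> (N <= q)%N ->
        ip (u p - u q) (u p - u q) < e) ->
    exists l : H, forall e : R[i], 0 < e -> exists N, forall p, (N <= p)%N ->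
        ip (u p - l) (u p - l) < e }.

Definition unitary_rep (R : realType) (H : lmodType R[i]) (ip : H -> H -> R[i])
    (K : bij -> H -> H) : Prop :=
  [/\ forall s (a : R[i]) (x y : H), K s (a *: x + y) = a *: K s x + K s y,
      forall s (x y : H), ip (K s x) (K s y) = ip x y,
      forall x : H, K bij_id x = x &
      forall s t (x : H), K (bij_comp s t) x = K s (K t x)].

Definition rep_continuous (R : realType) (H : lmodType R[i]) (ip : H -> H -> R[i])
    (K : bij -> H -> H) : Prop :=
  forall (eta : H) (e : R[i]), 0 < e -> exists k, forall s : bij, fixes_first k s ->
    ip (K s eta - eta) (K s eta - eta) < e.

Definition weak_op_limit (R : realType) (H : lmodType R[i]) (ip : H -> H -> R[i])
    (A : nat -> H -> H) (P : H -> H) : Prop :=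
  forall (xi eta : H) (e : R[i]), 0 < e -> exists N, forall m, (N <= m)%N ->
    `| ip (A m xi) eta - ip (P xi) eta | < e.

(* Main.v *)
Require Import Defs.
From HB Require Import structures.
From mathcomp Require Import all_boot all_order all_algebra.
From mathcomp Require Import complex.
From mathcomp Require Import reals.
From mathcomp Require Import zify.
From Stdlib Require Import FunctionalExtensionality ProofIrrelevance.
From mathcomp Require Import ring.
Import Order.TTheory GRing.Theory Num.Theory.

Lemma bij_eq (s t : bij) : bfun s =1 bfun t -> s = t.
Proof.
case: s => f g fK gK; case: t => f' g' fK' gK' /= e.
have ef : f = f' by apply: functional_extensionality.
subst f'.
have eg : g = g'.
  apply: functional_extensionality => x; apply: (can_inj fK).
  by rewrite gK gK'.
subst g'.
by rewrite (proof_irrelevance _ fK fK') (proof_irrelevance _ gK gK').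
Qed.

Lemma foldE n m c k j : (c + k <= m)%N ->
  bfun (foldr Defs.bij_comp bij_id [seq transp (n+i) (n+m+i) | i <- iota c k]) j =
  if (n+c <= j) && (j < n+c+k) then j+m else
  if (n+m+c <= j) && (j < n+m+c+k) then j - m else j.
Proof.
elim: k c => [|k IH] c hck /=.
  case: ifP => h1; first lia. case: ifP => h2 //; lia.
rewrite IH; last lia.
rewrite /trf.
case E1: (n + c.+1 <= j < n + c.+1 + k); case E2: (n + m + c.+1 <= j < n + m + c.+1 + k);
  repeat case: ifP; lia.
Qed.

Lemma nsigmaE n m j : nsigma n m j =
  if (n <= j) && (j < n + m) then j + m else
  if (n + m <= j) && (j < n + m + m) then j - m else j.
Proof. by rewrite /nsigma (foldE n m 0 m j) // !addn0. Qed.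

Lemma nsigma_invol n m j : nsigma n m (nsigma n m j) = j.
Proof. rewrite !nsigmaE; repeat case: ifP; lia. Qed.

Lemma nsigma_conj n m M j : (m + m <= M)%N -> (j < n + M)%N ->
  nsigma n M (nsigma n m (nsigma n M j)) = j.
Proof. move=> h1 h2; rewrite !nsigmaE; repeat case: ifP; lia. Qed.

Local Open Scope ring_scope.

Lemma eq_by_eps (C : numFieldType) (a b : C) :
  (forall e : C, 0 < e -> `|a - b| < e) -> a = b.
Proof.
move=> h; case: (eqVneq a b) => // /eqP hne.
have : 0 < `|a - b| by rewrite normr_gt0 subr_eq0; apply/eqP.
by move=> /h; rewrite ltxx.
Qed.

Section IP.
Variables (R : realType) (H : lmodType R[i]) (ip : H -> H -> R[i]).
Hypothesis hH : is_hilbert ip.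

Lemma ip0l z : ip 0 z = 0.
Proof.
have := ip_linl hH 1 0 0 z; rewrite scaler0 addr0 mul1r.
by rewrite -{1}[ip 0 z]addr0 => /addrI <-.
Qed.

Lemma ipZl a x z : ip (a *: x) z = a * ip x z.
Proof. by have := ip_linl hH a x 0 z; rewrite !addr0 ip0l addr0. Qed.

Lemma ipBl x y z : ip (x - y) z = ip x z - ip y z.
Proof.
have := ip_linl hH (-1) y x z; rewrite scaleN1r addrC => ->.
by rewrite mulN1r addrC.
Qed.

Lemma ipZr x a z : ip x (a *: z) = a^* * ip x z.
Proof. by rewrite (ip_herm hH) ipZl rmorphM /= -(ip_herm hH). Qed.

Lemma ipBr x y z : ip x (y - z) = ip x y - ip x z.
Proof. by rewrite (ip_herm hH) ipBl rmorphB /= -!(ip_herm hH). Qed.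

Lemma ip0r x : ip x 0 = 0.
Proof. by rewrite (ip_herm hH) ip0l conjC0. Qed.

Lemma ipCS d w : `|ip d w| ^+ 2 <= ip w w * ip d d.
Proof.
have hW := ip_ge0 hH w.
have hWc : (ip w w)^* = ip w w by apply: geC0_conj.
have hwd : ip w d = (ip d w)^* by apply: (ip_herm hH).
have h := ip_ge0 hH (ip w w *: d - ip d w *: w).
have e : ip (ip w w *: d - ip d w *: w) (ip w w *: d - ip d w *: w)
   = ip w w * (ip w w * ip d d - ip d w * (ip d w)^*).
  rewrite !ipBl !ipZl !ipBr !ipZr hWc hwd; ring.
rewrite e in h; rewrite normCK.
case: (eqVneq (ip w w) 0) => hw0.
  have -> : w = 0 by apply: (ip_eq0 hH).
  by rewrite ip0r conjC0 mulr0 ip0l mul0r.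
have hWp : 0 < ip w w by rewrite lt_def hw0.
by rewrite -subr_ge0; move: h; rewrite pmulr_rge0.
Qed.

End IP.
Arguments ip0l {R H ip}. Arguments ipZl {R H ip}. Arguments ipBl {R H ip}. Arguments ipZr {R H ip}. Arguments ipBr {R H ip}. Arguments ip0r {R H ip}. Arguments ipCS {R H ip}.

Theorem lemma2 (R : realType) (H : lmodType R[i]) (ip : H -> H -> R[i])
    (K : bij -> H -> H) (n : nat) (P : H -> H) :
  is_hilbert ip ->
  unitary_rep ip K ->
  rep_continuous ip K ->
  weak_op_limit ip (fun m => K (nsigma n m)) P ->
  forall xi : H, P (P xi) = P xi.
Proof.
move=> hH [Klin Kunit Kid Kcomp] hcont hP.
have Ksub s x y : K s (x - y) = K s x - K s y.
  by have := Klin s (-1) y x; rewrite scaleN1r addrC => ->; rewrite scaleN1r addrC.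
have invol m y : K (nsigma n m) (K (nsigma n m) y) = y.
  rewrite -Kcomp -[RHS]Kid; congr K; apply: bij_eq => j /=.
  exact: nsigma_invol.
have adj m x y : ip (K (nsigma n m) x) y = ip x (K (nsigma n m) y).
  by rewrite -{1}[y](invol m) Kunit.
have key m xi eta : ip (K (nsigma n m) (P xi)) eta = ip (P xi) eta.
  apply: eq_by_eps => e e0.
  rewrite adj.
  have e3pos : 0 < e / 3 by rewrite divr_gt0 // ltr0n.
  have [N1 hN1] := hP xi (K (nsigma n m) eta) _ e3pos.
  have [N2 hN2] := hP xi eta _ e3pos.
  have hW := ip_ge0 hH eta.
  have hW1 : 0 < ip eta eta + 1 := ltr_wpDl hW ltr01.
  have dpos : 0 < (e / 3) ^+ 2 / (ip eta eta + 1).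
    by rewrite divr_gt0 // exprn_gt0.
  have [k hk] := hcont xi _ dpos.
  pose M := (N1 + N2 + k + m + m)%N.
  pose t := Defs.bij_comp (nsigma n M) (Defs.bij_comp (nsigma n m) (nsigma n M)).
  have tfix : fixes_first k t.
    move=> j hj /=; apply: nsigma_conj; rewrite /M; lia.
  have hcomp : K (nsigma n m) (K (nsigma n M) xi) = K (nsigma n M) (K t xi).
    rewrite -!Kcomp; congr K; apply: bij_eq => j /=.
    by rewrite nsigma_invol.
  have mid : `|ip (K (nsigma n m) (K (nsigma n M) xi)) eta
               - ip (K (nsigma n M) xi) eta| < e / 3.
    rewrite hcomp -(ipBl hH) -Ksub adj.
    have cs := ipCS hH (K t xi - xi) (K (nsigma n M) eta).
    rewrite Kunit in cs.
    have hD := hk t tfix.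
    rewrite -(ltr_pXn2r (_ : 0 < 2)%N) ?nnegrE ?normr_ge0 ?ltW //.
    apply: (le_lt_trans cs).
    apply: (le_lt_trans (y := ip eta eta * ((e / 3) ^+ 2 / (ip eta eta + 1)))).
      by apply: ler_wpM2l => //; apply: ltW.
    rewrite -subr_gt0.
    have -> : (e / 3) ^+ 2 - ip eta eta * ((e / 3) ^+ 2 / (ip eta eta + 1))
        = (e / 3) ^+ 2 / (ip eta eta + 1).
      by field; rewrite gt_eqF.
    done.
  have h1 : `|ip (K (nsigma n M) xi) (K (nsigma n m) eta) - ip (P xi) (K (nsigma n m) eta)| < e / 3.
    apply: hN1; rewrite /M; lia.
  have h2 : `|ip (K (nsigma n M) xi) eta - ip (P xi) eta| < e / 3.
    apply: hN2; rewrite /M; lia.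
  rewrite -adj in h1.
  have -> : ip (P xi) (K (nsigma n m) eta) - ip (P xi) eta =
    - (ip (K (nsigma n m) (K (nsigma n M) xi)) eta - ip (P xi) (K (nsigma n m) eta))
    + (ip (K (nsigma n m) (K (nsigma n M) xi)) eta - ip (K (nsigma n M) xi) eta)
    + (ip (K (nsigma n M) xi) eta - ip (P xi) eta) by ring.
  have -> : e = e / 3 + e / 3 + e / 3 by field.
  apply: (le_lt_trans (ler_normD _ _)).
  apply: ltrD => //.
  apply: (le_lt_trans (ler_normD _ _)).
  by apply: ltrD => //; rewrite normrN.
move=> xi.
have hall eta : ip (P (P xi)) eta = ip (P xi) eta.
  apply: eq_by_eps => e e0.
  have [N hN] := hP (P xi) eta _ e0.
  have := hN N (leqnn N); rewrite key distrC.
  done.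
apply/eqP; rewrite -subr_eq0; apply/eqP; apply: (ip_eq0 hH).
by rewrite (ipBl hH) !hall subrr.
Qed.
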